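(* Fix $d\ge0$ and for a unit vector $z\in\mathbb{S}^{n-1}$ let $\mathrm{slab}_z(x)=\mathbf{1}[-d\le z\cdot x\le d]$. If $z,z'\in\mathbb{S}^{n-1}$ satisfy $0<\|z-z'\|_2\le 1/3$, then \[ \Pr_{\mathbf{x}\sim N(0,I_n)}[\mathrm{slab}_z(\mathbf{x})\ne\mathrm{slab}_{z'}(\mathbf{x})]\le 5\|z-z'\|_2\sqrt{\ln\!\Big(\frac{1}{\|z-z'\|_2}\Big)} . \]
   Context: $N(0,I_n)$ is the standard Gaussian distribution on $\mathbb{R}^n$. *)

(* Defs.v *)
From HB Require Import structures.
From mathcomp Require Import all_boot all_order all_algebra.
From mathcomp Require Import all_classical all_reals all_analysis.
Set Implicit Arguments. Unset Strict Implicit. Unset Printing Implicit Defensive.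
Import Order.TTheory GRing.Theory Num.Theory.
Local Open Scope classical_set_scope.
Local Open Scope ring_scope.

Definition vcons (R : realType) (n : nat) (t : R) (v : 'rV[R]_n) : 'rV[R]_n.+1 :=
  \row_(i < n.+1) (if unlift ord0 i is Some j then v 0 j else t).

(* Expectation of a nonnegative extended-real function under N(0, I_n),
   as the iterated integral against the standard normal law on each
   coordinate (product measure N(0,1)^{\otimes n}). *)
Fixpoint gauss_expect (R : realType) (n : nat) : ('rV[R]_n -> \bar R) -> \bar R :=
  match n with
  | 0 => fun f => f 0
  | m.+1 => fun f =>
      (\int[normal_prob (0:R) 1]_t gauss_expect (fun v : 'rV[R]_m => f (vcons t v)))%E
  end.

Definition gauss_prob (R : realType) (n : nat) (A : set 'rV[R]_n) : \bar R :=
  gauss_expect (fun x => (\1_A x)%:E).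

Definition dotv (R : realType) (n : nat) (u v : 'rV[R]_n) : R :=
  \sum_(i < n) u 0 i * v 0 i.

Definition norm2 (R : realType) (n : nat) (u : 'rV[R]_n) : R :=
  Num.sqrt (dotv u u).

Definition slab (R : realType) (n : nat) (d : R) (z x : 'rV[R]_n) : bool :=
  (- d <= dotv z x) && (dotv z x <= d).

(* Main.v *)
Require Import Defs.
From HB Require Import structures.
From mathcomp Require Import all_boot all_order all_algebra.
From mathcomp Require Import all_classical all_reals all_analysis.
Import Order.TTheory GRing.Theory Num.Theory.
Local Open Scope classical_set_scope.
Local Open Scope ring_scope.
From mathcomp Require Import measurable_realfun ring lra.
Import Order.TTheory GRing.Theory Num.Theory.

Section dens.
Context {R : realType}.
Local Notation mu := (@lebesgue_measure R).

Lemma integral_normal01 (f : R -> \bar R) : (forall x, (0 <= f x)%E) ->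
  measurable_fun [set: R] f ->
  (\int[normal_prob 0 1]_x f x = \int[mu]_x (f x * (normal_pdf 0 1 x)%:E))%E.
Proof.
move=> f0 mf.
have dom := normal_prob_dominates (0:R) 1.
rewrite -(Radon_Nikodym_SigmaFinite.change_of_variables dom)//.
apply: ae_eq_integral => //.
- apply: emeasurable_funM => //.
  apply: measurable_int.
  exact: Radon_Nikodym_SigmaFinite.f_integrable.
- apply: emeasurable_funM => //.
  by apply/measurable_EFinP; exact: measurable_normal_pdf.
- apply: ae_eqe_mul2l => /=.
  apply: integral_ae_eq => //.
  + exact: Radon_Nikodym_SigmaFinite.f_integrable.
  + by apply/measurable_EFinP; exact: measurable_normal_pdf.
  + move=> E _ mE.
    by rewrite -Radon_Nikodym_SigmaFinite.f_integral.
Qed.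
End dens.
Section g1.
Context {R : realType}.
Local Notation mu := (@lebesgue_measure R).

Lemma peak_scale (r : R) : 0 < r ->
  normal_peak r^-1 = r * normal_peak 1.
Proof.
move=> r0; rewrite /normal_peak expr1n mul1r exprVn.
rewrite -mulrnAr sqrtrM ?invr_ge0 ?exprn_ge0 ?ltW// sqrtrV ?exprn_ge0 ?ltW//.
by rewrite sqrtr_sqr gtr0_norm// invfM invrK.
Qed.

Lemma gauss1 (K P Q C : R) : 0 <= K -> 0 < 1 + P ->
  (\int[normal_prob 0 1]_t (K * expR (- (P * t ^+ 2 + 2 * Q * t + C) / 2))%:E =
   (K / Num.sqrt (1 + P) * expR (- (C - Q ^+ 2 / (1 + P)) / 2))%:E)%E.
Proof.
move=> K0 P1.
rewrite integral_normal01; last 2 first.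
- by move=> x; rewrite lee_fin mulr_ge0 ?expR_ge0.
- apply/measurable_EFinP; apply: measurable_funM => //.
  apply: measurableT_comp => //; apply: measurable_funM => //.
  apply: measurableT_comp => //.
  apply: measurable_funD => //; apply: measurable_funD => //.
    by apply: measurable_funM => //; exact: measurable_funX.
set r := Num.sqrt (1 + P).
have r0 : 0 < r by rewrite sqrtr_gt0.
have r2 : r ^+ 2 = 1 + P by rewrite sqr_sqrtr ?ltW.
set K' := K / r * expR (- (C - Q ^+ 2 / (1 + P)) / 2).
transitivity (\int[mu]_x (K'%:E * (normal_pdf (- Q / (1 + P)) r^-1 x)%:E))%E.
  apply: eq_integral => x _.
  rewrite -!EFinM; congr EFin.
  rewrite !normal_pdfE ?oner_neq0 ?invr_eq0 ?gt_eqF//.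
  rewrite peak_scale// /normal_fun /K'.
  have rn : r != 0 by rewrite gt_eqF.
  set A := (- _ / 2).
  set B := (- (x - 0) ^+ 2 / _).
  set D := (- (C - _) / 2).
  set E := (- (x - _) ^+ 2 / _).
  have key : expR A * expR B = expR D * expR E.
    rewrite -!expRD; congr expR.
    rewrite /A /B /D /E exprVn r2 expr1n.
    have Pn : 1 + P != 0 by rewrite gt_eqF.
    by field.
  transitivity (K * normal_peak 1 * (expR A * expR B)); first ring.
  rewrite key; field; exact: rn.
rewrite integralZl//; last exact: integrable_normal_pdf.
by rewrite integral_normal_pdf mule1.
Qed.
End g1.

Section vec.
Context {R : realType}.
Definition tl {n} (w : 'rV[R]_n.+1) : 'rV[R]_n := \row_(j < n) w 0 (lift ord0 j).

Lemma dotv_recl n (u v : 'rV[R]_n.+1) :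
  dotv u v = u 0 ord0 * v 0 ord0 + dotv (tl u) (tl v).
Proof.
rewrite /dotv big_ord_recl; congr (_ + _).
by apply: eq_bigr => i _; rewrite !mxE.
Qed.

Lemma vcons0 n t (x : 'rV[R]_n) : vcons t x 0 ord0 = t.
Proof. by rewrite /vcons mxE unlift_none. Qed.

Lemma tl_vcons n t (x : 'rV[R]_n) : tl (vcons t x) = x.
Proof.
apply/rowP => j; rewrite /tl /vcons !mxE liftK.
by [].
Qed.

Lemma dotv_vcons n (w : 'rV[R]_n.+1) t x :
  dotv w (vcons t x) = w 0 ord0 * t + dotv (tl w) x.
Proof. by rewrite dotv_recl vcons0 tl_vcons. Qed.

Lemma dotv_ge0 n (u : 'rV[R]_n) : 0 <= dotv u u.
Proof. by apply: sumr_ge0 => i _; rewrite -expr2 sqr_ge0. Qed.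

Lemma dotv_tl_le n (u : 'rV[R]_n.+1) : dotv (tl u) (tl u) <= dotv u u.
Proof. by rewrite [X in _ <= X]dotv_recl lerDr -expr2 sqr_ge0. Qed.
End vec.

Section gexp.
Context {R : realType}.
Local Open Scope ereal_scope.

Lemma gauss_expect_ge0 n (f : 'rV[R]_n -> \bar R) : (forall x, 0 <= f x) ->
  0 <= gauss_expect f.
Proof.
elim: n f => [|n IH] f f0 /=; first exact: f0.
by apply: integral_ge0 => t _; apply: IH.
Qed.

Lemma gauss_expect_le n (f g : 'rV[R]_n -> \bar R) : (forall x, 0 <= f x) ->
  (forall x, f x <= g x) -> gauss_expect f <= gauss_expect g.
Proof.
elim: n f g => [|n IH] f g f0 fg /=; first exact: fg.
have g0 x : 0 <= g x by apply: le_trans (fg x).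
rewrite !ge0_integralTE; last 2 first.
- by move=> t; apply: gauss_expect_ge0.
- by move=> t; apply: gauss_expect_ge0.
apply: le_ereal_sup => _ [h /= hf <-]; exists h => //= x.
apply: le_trans (hf x) _; apply: IH => // y.
Qed.
End gexp.

Section main.
Context {R : realType}.

Definition Dl (p q a b e : R) := (1 + p * a) * (1 - q * e) + p * q * b ^+ 2.
Definition Nq (p q a b e c1 c2 : R) :=
  (p * (1 - q * e) * c1 ^+ 2 + 2 * p * q * b * c1 * c2
   - q * (1 + p * a) * c2 ^+ 2) / Dl p q a b e.
Definition Fcl (p q a b e c1 c2 : R) :=
  (Num.sqrt (Dl p q a b e))^-1 * expR (- Nq p q a b e c1 c2 / 2).
Definition term {n} (p q : R) (w v : 'rV[R]_n) (c1 c2 : R) (x : 'rV[R]_n) :=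
  expR ((q * (c2 + dotv v x) ^+ 2 - p * (c1 + dotv w x) ^+ 2) / 2).

Lemma term_vcons n p q (w v : 'rV[R]_n.+1) c1 c2 t x :
  term p q w v c1 c2 (vcons t x) =
  term p q (tl w) (tl v) (c1 + w 0 ord0 * t) (c2 + v 0 ord0 * t) x.
Proof. by rewrite /term !dotv_vcons !addrA. Qed.

Lemma Dl_gt0 p q a b e : 0 <= p -> 0 <= q -> 0 <= a -> q * e < 1 ->
  0 < Dl p q a b e.
Proof.
move=> p0 q0 a0 qe; rewrite /Dl.
have h1 : 0 < (1 + p * a) * (1 - q * e).
  apply: mulr_gt0; last by rewrite subr_gt0.
  by apply: (@lt_le_trans _ _ 1) => //; rewrite lerDl mulr_ge0.
have h2 : 0 <= p * q * b ^+ 2.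
  by apply: mulr_ge0; [exact: mulr_ge0 | exact: sqr_ge0].
lra.
Qed.

Lemma step_alg p q a b e w0 v0 c1 c2 :
  Dl p q a b e != 0 ->
  Dl p q (a + w0 ^+ 2) (b + w0 * v0) (e + v0 ^+ 2) != 0 ->
  let P := Nq p q a b e w0 v0 in
  let Q := (p * (1 - q * e) * w0 * c1 + p * q * b * (w0 * c2 + v0 * c1)
            - q * (1 + p * a) * v0 * c2) / Dl p q a b e in
  let C := Nq p q a b e c1 c2 in
  [/\ (forall t, Nq p q a b e (c1 + w0 * t) (c2 + v0 * t) = P * t ^+ 2 + 2 * Q * t + C),
      Dl p q a b e * (1 + P) = Dl p q (a + w0 ^+ 2) (b + w0 * v0) (e + v0 ^+ 2) &
      (1 + P != 0 -> C - Q ^+ 2 / (1 + P) = Nq p q (a + w0 ^+ 2) (b + w0 * v0) (e + v0 ^+ 2) c1 c2)].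
Proof.
move=> D0 D1 P Q C; split.
- move=> t; rewrite /P /Q /C /Nq; ring.
- move: D0 D1; rewrite /P /Nq /Dl => D0 D1; field; exact: D0.
- rewrite /C /Q /P /Nq.
  move: D0 D1; rewrite /Dl => D0 D1 P0.
  by field; rewrite D0 D1.
Qed.

Lemma meas_qexp (K P Q C : R) :
  measurable_fun [set: R] (fun t : R => (K * expR (- (P * t ^+ 2 + 2 * Q * t + C) / 2))%:E).
Proof.
apply/measurable_EFinP; apply: measurable_funM => //.
apply: measurableT_comp => //; apply: measurable_funM => //.
apply: measurableT_comp => //.
apply: measurable_funD => //; apply: measurable_funD => //.
by apply: measurable_funM => //; exact: measurable_funX.
Qed.

Lemma main_formula n (w v : 'rV[R]_n) p q c1 c2 e1 e2 :
  0 <= p -> 0 <= q -> q * dotv v v < 1 ->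
  gauss_expect (fun x => (term p q w v c1 c2 x + term p q w v e1 e2 x)%:E) =
  (Fcl p q (dotv w w) (dotv w v) (dotv v v) c1 c2 +
   Fcl p q (dotv w w) (dotv w v) (dotv v v) e1 e2)%:E.
Proof.
move=> p0 q0; elim: n w v c1 c2 e1 e2 => [|n IH] w v c1 c2 e1 e2 qv.
  have d0 (u x : 'rV[R]_0) : dotv u x = 0 by rewrite /dotv big_ord0.
  rewrite /= /term /Fcl /Nq /Dl !d0.
  rewrite !mulr0 !addr0 !subr0 !mul1r expr0n /= mulr0 addr0 sqrtr1 invr1 !mul1r.
  by congr (_ + _)%:E; congr expR; field.
set w0 := w 0 ord0; set v0 := v 0 ord0.
set a' := dotv (tl w) (tl w); set b' := dotv (tl w) (tl v); set e' := dotv (tl v) (tl v).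
have Ha : dotv w w = a' + w0 ^+ 2 by rewrite dotv_recl addrC expr2.
have Hb : dotv w v = b' + w0 * v0 by rewrite dotv_recl addrC.
have He : dotv v v = e' + v0 ^+ 2 by rewrite dotv_recl addrC expr2.
have a'0 : 0 <= a' by apply: dotv_ge0.
have qe' : q * e' < 1.
  apply: le_lt_trans qv; rewrite ler_wpM2l //; exact: dotv_tl_le.
have D'0 : 0 < Dl p q a' b' e' by apply: Dl_gt0.
have D0 : 0 < Dl p q (a' + w0 ^+ 2) (b' + w0 * v0) (e' + v0 ^+ 2).
  by apply: Dl_gt0 => //; [rewrite addr_ge0 ?sqr_ge0 | rewrite -He].
rewrite Ha Hb He.
have [HPQC HD HN] := step_alg p q a' b' e' w0 v0 c1 c2 (lt0r_neq0 D'0) (lt0r_neq0 D0).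
have [HPQC' _ HN'] := step_alg p q a' b' e' w0 v0 e1 e2 (lt0r_neq0 D'0) (lt0r_neq0 D0).
set P := Nq p q a' b' e' w0 v0 in HD HN HN' HPQC HPQC' *.
have P1 : 0 < 1 + P.
  have -> : 1 + P = Dl p q (a' + w0 ^+ 2) (b' + w0 * v0) (e' + v0 ^+ 2) / Dl p q a' b' e'.
    by rewrite -HD /P; field; exact: lt0r_neq0.
  by rewrite divr_gt0.
set K := (Num.sqrt (Dl p q a' b' e'))^-1.
have K0 : 0 <= K by rewrite invr_ge0 sqrtr_ge0.
rewrite /=.
transitivity (\int[normal_prob 0 1]_t
   ((K * expR (- Nq p q a' b' e' (c1 + w0 * t) (c2 + v0 * t) / 2))%:E +
    (K * expR (- Nq p q a' b' e' (e1 + w0 * t) (e2 + v0 * t) / 2))%:E))%E.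
  apply: eq_integral => t _.
  transitivity (gauss_expect (fun x =>
     (term p q (tl w) (tl v) (c1 + w0 * t) (c2 + v0 * t) x +
      term p q (tl w) (tl v) (e1 + w0 * t) (e2 + v0 * t) x)%:E)).
    by congr gauss_expect; apply: funext => x; rewrite !term_vcons.
  by rewrite IH // /Fcl EFinD.
under eq_integral do rewrite HPQC HPQC'.
rewrite ge0_integralD //; last 4 first.
- by move=> t _; rewrite lee_fin mulr_ge0 ?expR_ge0.
- exact: meas_qexp.
- by move=> t _; rewrite lee_fin mulr_ge0 ?expR_ge0.
- exact: meas_qexp.
rewrite !gauss1 // -EFinD HN ?HN' ?lt0r_neq0 //.
have -> : K / Num.sqrt (1 + P) =
  (Num.sqrt (Dl p q (a' + w0 ^+ 2) (b' + w0 * v0) (e' + v0 ^+ 2)))^-1.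
  by rewrite -HD sqrtrM ?ltW // invfM.
by [].
Qed.
End main.

Section final.
Context {R : realType}.

Lemma inv_sqrt_le (Y c : R) : 0 < c -> (c ^+ 2)^-1 <= Y -> (Num.sqrt Y)^-1 <= c.
Proof.
move=> c0 cY.
have Y0 : 0 < Y by apply: lt_le_trans cY; rewrite invr_gt0 exprn_gt0.
have h : c^-1 <= Num.sqrt Y.
  have -> : c^-1 = Num.sqrt ((c ^+ 2)^-1).
    by rewrite -exprVn sqrtr_sqr gtr0_norm // invr_gt0.
  exact: ler_wsqrtr.
rewrite -[c]invrK lef_pV2 ?posrE ?invr_gt0 ?sqrtr_gt0 //.
Qed.

Lemma Fcl_le (p q a b e c : R) : 0 <= p -> 0 <= q -> 0 <= a -> q * e < 1 ->
  Fcl p q a b e c 0 <= (Num.sqrt ((1 + p * a) * (1 - q * e)))^-1.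
Proof.
move=> p0 q0 a0 qe.
have D0 := @Dl_gt0 R p q a b e p0 q0 a0 qe.
have X0 : 0 < (1 + p * a) * (1 - q * e).
  apply: mulr_gt0; last by rewrite subr_gt0.
  by apply: (@lt_le_trans _ _ 1) => //; rewrite lerDl mulr_ge0.
rewrite /Fcl -[X in _ <= X]mulr1.
apply: ler_pM.
- by rewrite invr_ge0 sqrtr_ge0.
- exact: expR_ge0.
- have hs : Num.sqrt ((1 + p * a) * (1 - q * e)) <= Num.sqrt (Dl p q a b e).
    apply: ler_wsqrtr; rewrite /Dl lerDl.
    by apply: mulr_ge0; [exact: mulr_ge0 | exact: sqr_ge0].
  rewrite lef_pV2 //; rewrite posrE sqrtr_gt0 //.
- rewrite expR_le1 /Nq mulr0 expr0n /= mulr0 subr0 addr0.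
  rewrite mulNr oppr_le0; apply: divr_ge0 => //; apply: divr_ge0; last exact: ltW.
  apply: mulr_ge0; last exact: sqr_ge0.
  by apply: mulr_ge0 => //; rewrite subr_ge0 ltW.
Qed.

Lemma disagree (d u u' : R) :
  (((- d <= u) && (u <= d)) != ((- d <= u') && (u' <= d))) ->
  (u - d) ^+ 2 <= (u - u') ^+ 2 \/ (u + d) ^+ 2 <= (u - u') ^+ 2.
Proof.
case: (lerP (- d) u) => h1; case: (lerP u d) => h2;
case: (lerP (- d) u') => h3; case: (lerP u' d) => h4 //= _;
  first [left; nra | right; nra].
Qed.

Lemma ln3 (x : R) : 3 <= x -> 16 / 25 <= ln x.
Proof.
move=> x3.
have e1 : expR (16 / 25 : R) <= 3.
  have h := expR_ge1Dx (- (16 / 25) : R).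
  have hp : 0 < expR (16 / 25 : R) := expR_gt0 _.
  rewrite expRN in h.
  have : (1 - 16 / 25) * expR (16 / 25 : R) <= 1.
    have h2 := ler_wpM2r (ltW hp) h.
    by rewrite mulVf ?lt0r_neq0 in h2.
  lra.
rewrite -[X in X <= _](expRK (16 / 25 : R)).
rewrite ler_ln ?posrE ?expR_gt0 //; first exact: le_trans x3.
by apply: lt_le_trans x3.
Qed.
End final.

Lemma dotvB {R : realType} n (z z' x : 'rV[R]_n) :
  dotv (z - z') x = dotv z x - dotv z' x.
Proof.
by rewrite /dotv -sumrB; apply: eq_bigr => i _; rewrite !mxE mulrBl.
Qed.

Theorem claim6p4 (R : realType) (n : nat) (d : R) (z z' : 'rV[R]_n) :
  0 <= d ->
  norm2 z = 1 -> norm2 z' = 1 ->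
  0 < norm2 (z - z') -> norm2 (z - z') <= 3^-1 ->
  (gauss_prob [set x | slab d z x != slab d z' x]
   <= (5 * norm2 (z - z') * Num.sqrt (ln (1 / norm2 (z - z'))))%:E)%E.
Proof.
move=> d0 nz nz' e0 e3.
set eps := norm2 (z - z') in e0 e3 *.
have dzz : dotv z z = 1.
  by rewrite -(sqr_sqrtr (@dotv_ge0 R n z)) -/(norm2 z) nz expr1n.
have dvv : dotv (z - z') (z - z') = eps ^+ 2.
  by rewrite /eps /norm2 sqr_sqrtr // dotv_ge0.
set m := (2 * eps ^+ 2)^-1.
have e20 : 0 < eps ^+ 2 by rewrite exprn_gt0.
have m0 : 0 <= m by rewrite invr_ge0 mulr_ge0 // ltW.
have me : m * eps ^+ 2 = 2^-1.
  rewrite /m; field; exact: lt0r_neq0.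
have qv : m * dotv (z - z') (z - z') < 1.
  by rewrite dvv me invf_lt1 // ltr1n.
apply: (@le_trans _ _ (gauss_expect (fun x =>
   (term m m z (z - z') (- d) 0 x + term m m z (z - z') d 0 x)%:E))).
  apply: gauss_expect_le => x; first by rewrite lee_fin indicE ler0n.
  rewrite lee_fin indicE.
  have t0 c : 0 <= term m m z (z - z') c 0 x by exact: expR_ge0.
  case: (boolP (x \in _)) => [/set_mem /= hx|_]; last by rewrite addr_ge0.
  have [h|h] := @disagree R d _ _ hx.
  - apply: (@le_trans _ _ (term m m z (z - z') (- d) 0 x)); last by rewrite lerDl.
    apply: le_trans (expR_ge1Dx _); rewrite lerDl.
    rewrite divr_ge0 // subr_ge0 add0r dotvB; apply: ler_wpM2l => //.
    by rewrite addrC.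
  - apply: (@le_trans _ _ (term m m z (z - z') d 0 x)); last by rewrite lerDr.
    apply: le_trans (expR_ge1Dx _); rewrite lerDl.
    rewrite divr_ge0 // subr_ge0 add0r dotvB; apply: ler_wpM2l => //.
    by rewrite addrC.
rewrite main_formula // dzz dvv lee_fin.
have hF c : Fcl m m 1 (dotv z (z - z')) (eps ^+ 2) c 0 <= 2 * eps.
  have qe : m * eps ^+ 2 < 1 by rewrite -dvv.
  apply: le_trans (@Fcl_le R m m 1 (dotv z (z - z')) (eps ^+ 2) c m0 m0 ler01 qe) _.
  apply: inv_sqrt_le; first by rewrite mulr_gt0.
  rewrite mulr1 me.
  have -> : ((2 * eps) ^+ 2)^-1 = m / 2.
    by rewrite /m; field; rewrite lt0r_neq0.
  lra.
have hl : 4 / 5 <= Num.sqrt (ln (1 / eps)).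
  have -> : (4 / 5 : R) = Num.sqrt ((4 / 5) ^+ 2).
    by rewrite sqrtr_sqr ger0_norm.
  apply: ler_wsqrtr.
  apply: (@le_trans _ _ (16 / 25)); first by lra.
  apply: ln3.
  rewrite div1r -[3]invrK lef_pV2 ?posrE ?invr_gt0 //.
apply: le_trans (lerD (hF (- d)) (hF d)) _.
have : 0 <= eps by exact: ltW.
nra.
Qed.
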